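(* Let $p,q$ be distinct primes and let $(G,H,T)$ be the envelope of a right conjugacy closed loop of order $pq$. Let $K$ be a subgroup with $H\lneq K\lneq G$, $|G:K|=q$ and $|K:H|=p$. Put $T_1=T\cap K$, $K_1=\langle T_1\rangle$ and $H_1=H\cap K_1$. Then $(K_1,H_1,T_1)$ is an RCC loop folder of order $p$ and $K_1$ is abelian. Moreover $K_1\trianglelefteq K$, $K=HK_1$, and $H_1\trianglelefteq K$.
   Context: For a finite loop $\mathcal{L}$ with identity $e$: $G=\langle R_a\mid a\in\mathcal L\rangle$ with $R_a\colon x\mapsto xa$, $H$ the stabilizer of $e$, $T=\{R_a\}$; $(G,H,T)$ is the envelope; the loop is right conjugacy closed if $T$ is a union of conjugacy classes of $G$. A loop folder is a triple $(G,H,T)$ with $G$ finite, $H\le G$, $1\in T\subseteq G$, $T$ a set of representatives of the right cosets $H^g\backslash G$ for every $g\in G$; RCC loop folder if $T$ is $G$-conjugation invariant; order $|T|$. *)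

(* Defs.v *)
From mathcomp Require Import all_boot all_fingroup.
Set Implicit Arguments. Unset Strict Implicit. Unset Printing Implicit Defensive.
Import GroupScope.
Local Open Scope group_scope.

Definition is_loop (L : finType) (mul : L -> L -> L) (e : L) : Prop :=
  [/\ forall x, mul e x = x, forall x, mul x e = x,
      forall a, injective (fun x => mul x a) & forall a, injective (mul a)].

(* T = { R_a | a in L } where R_a : x |-> x a, as permutations of L
   (mathcomp permutations compose left-to-right: (s * t) x = t (s x)). *)
Definition env_T (L : finType) (mul : L -> L -> L) : {set {perm L}} :=
  [set s : {perm L} | [exists a, [forall x, s x == mul x a]]].

Definition env_G (L : finType) (mul : L -> L -> L) : {set {perm L}} :=
  <<env_T mul>>.

Definition env_H (L : finType) (mul : L -> L -> L) (e : L) : {set {perm L}} :=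
  [set g in env_G mul | g e == e].

Definition RCC_loop (L : finType) (mul : L -> L -> L) : Prop :=
  forall g t, g \in env_G mul -> t \in env_T mul -> t ^ g \in env_T mul.

Definition loop_folder (gT : finGroupType) (G H T : {set gT}) : Prop :=
  [/\ group_set G, group_set H, H \subset G, 1 \in T &
      T \subset G /\
      (forall g x, g \in G -> x \in G -> #|T :&: ((H :^ g) :* x)| = 1%N)].

Definition RCC_loop_folder (gT : finGroupType) (G H T : {set gT}) : Prop :=
  loop_folder G H T /\ (forall g, g \in G -> T :^ g = T).

(* Main.v *)
Require Import Defs.
From mathcomp Require Import all_boot all_fingroup.
Set Implicit Arguments. Unset Strict Implicit. Unset Printing Implicit Defensive.
Import GroupScope.
Local Open Scope group_scope.

Lemma abel_core (L : finType) (e : L) (p : nat) (K1 : {group {perm L}})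
  (T1 : {set {perm L}}) :
  prime p -> T1 \subset K1 -> #|T1| = p -> #|orbit 'P K1 e| = p ->
  (forall t k, t \in T1 -> k \in K1 -> t ^ k \in T1) ->
  (forall t t', t \in T1 -> t' \in T1 -> t e = t' e -> t = t') -> 1 \in T1 ->
  (forall b, b \in orbit 'P K1 e -> exists2 t, t \in T1 & t e = b) ->
  forall t s, t \in T1 -> s \in T1 -> commute t s.
Proof.
move=> pp sTK cT cB conjT injT T11 trT.
set B := orbit 'P K1 e.
have PE : forall x (a : {perm L}), ('P%act x a) = a x by [].
have eB : e \in B by apply/orbitP; exists 1; rewrite ?group1 // PE perm1.
have p0 : 0 < p by apply: prime_gt0.
set N := 'C_K1(B | 'P).
have NC : forall n t, n \in N -> t \in T1 -> commute n t.
  move=> n t /setIP[Kn /astabP nB] Tt.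
  apply: commute_sym; apply/commgP; apply/conjg_fixP.
  apply: (injT (t ^ n) t); [exact: conjT | exact: Tt | ].
  have ne : n e = e by have := nB e eB; rewrite PE.
  have := permJ t n e; rewrite ne => ->.
  have tB : t e \in B by apply/orbitP; exists t; rewrite ?PE //; apply: (subsetP sTK).
  by have := nB _ tB; rewrite PE.
have key : forall t, t \in T1 -> t != 1 ->
    #|K1 : 'C_K1[t]| < p /\ #|'C_K1[t]| = (p * #|N|)%N.
  move=> t Tt nt1.
  have Kt : t \in K1 := subsetP sTK t Tt.
  set C := 'C_K1[t].
  have idx : #|K1 : C| < p.
    rewrite index_cent1.
    have : t ^: K1 \subset T1 :\ 1.
      apply/subsetP => y /imsetP[k Kk ->]; rewrite !inE conjT // andbT.
      by rewrite conjg_eq1.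
    have cD : #|T1 :\ 1| = p.-1 by move: (cardsD1 1 T1); rewrite T11 cT add1n => ->.
    move/subset_leq_card; rewrite cD => Hle; apply: (leq_ltn_trans Hle).
    by rewrite -{2}(prednK p0).
  have CK : C \subset K1 by apply: subsetIl.
  have OC : orbit 'P C e = B.
    apply/eqP; rewrite eqEcard; apply/andP; split.
      apply/subsetP => b /orbitP[c Cc <-]; apply/orbitP; exists c => //.
      exact: (subsetP CK).
    have h1 := card_orbit_stab 'P C e.
    have h2 := card_orbit_stab 'P K1 e.
    rewrite -/B cB.
    have sCe : 'C_C[e | 'P] \subset 'C_K1[e | 'P] by apply: setSI.
    have h3 := Lagrange sCe.
    have h4 := Lagrange CK.
    set O := #|orbit 'P C e| in h1 *.
    set ce := #|'C_C[e | 'P]| in h1 h3.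
    set j := #|'C_K1[e | 'P] : 'C_C[e | 'P]| in h3.
    set i := #|K1 : C| in idx h4.
    have ce0 : 0 < ce by apply: cardG_gt0.
    have : (p * j)%N = (O * i)%N.
      apply/eqP; rewrite -(eqn_pmul2l ce0); apply/eqP.
      rewrite -/B cB in h2.
      by rewrite mulnCA h3 h2 -h4 -h1 mulnA [(ce * O)%N]mulnC.
    move=> eq1.
    have : (p %| O * i)%N by rewrite -eq1 dvdn_mulr.
    rewrite Euclid_dvdM // => /orP[pO|pi].
      apply: dvdn_leq => //; rewrite /O card_gt0; apply/set0Pn; exists e.
      by apply/orbitP; exists 1; rewrite ?group1 // PE perm1.
    have i0 : 0 < i by apply: indexg_gt0.
    by have := dvdn_leq i0 pi; rewrite leqNgt idx.
  have capp : forall (c x : {perm L}) y, commute c x -> x (c y) = c (x y).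
    by move=> c x y cx; rewrite -permM cx permM.
  have Ccomm : forall c x, c \in C -> x \in <[t]> -> commute c x.
    move=> c x /setIP[_ /cent1P ct] /cycleP[i ->]; exact: commuteX.
  have semi : forall x b, x \in <[t]> -> b \in B -> x b = b ->
      forall b', b' \in B -> x b' = b'.
    move=> x b Xx; rewrite -OC => /orbitP[c1 Cc1 <-]; rewrite PE => xb b'.
    move=> /orbitP[c2 Cc2 <-]; rewrite PE.
    have xe : x e = e.
      apply: (@perm_inj _ c1); rewrite -capp ?xb //; exact: Ccomm Cc1 Xx.
    by rewrite capp ?xe //; exact: Ccomm Cc2 Xx.
  have XK : <[t]> \subset K1 by rewrite cycle_subG.
  have actsX : [acts <[t]>, on B | 'P].
    exact: subset_trans XK (acts_orbit _ _ (subsetT _)).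
  have OX : orbit 'P <[t]> e = B.
    have sum := acts_sum_card_orbit actsX.
    set m := #|<[t]> : 'C_(<[t]>)[e | 'P]|.
    have : \sum_(O in orbit 'P <[t]> @: B) #|O| = \sum_(O in orbit 'P <[t]> @: B) m.
      apply: eq_bigr => O /imsetP[b bB ->]; rewrite card_orbit /m.
      congr (#|_ : _|); apply/setP => x.
      apply/setIP/setIP => -[Xx /astab1P]; rewrite PE => hx; split => //;
        apply/astab1P; rewrite PE.
        exact: (semi x b).
      exact: (semi x e).
    rewrite sum sum_nat_const cB => pm.
    have : (m %| p)%N by rewrite pm dvdn_mull.
    case/primeP: pp => _ /[apply] /orP[/eqP m1|/eqP mp].
      have := card_orbit 'P <[t]> e; rewrite -/m m1 => /card_orbit1 o1.
      have : t e \in orbit 'P <[t]> e by apply/orbitP; exists t; rewrite ?cycle_id.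
      rewrite o1 inE => /eqP te.
      by case/eqP: nt1; apply: injT => //; rewrite perm1.
    apply/eqP; rewrite eqEcard; apply/andP; split.
      apply/subsetP => b /orbitP[x Xx <-]; apply/orbitP; exists x => //.
      exact: (subsetP XK).
    by rewrite cB card_orbit -/m mp.
  have stab : 'C_C[e | 'P] = N.
    apply/eqP; rewrite eqEsubset; apply/andP; split; apply/subsetP => c.
      case/setIP => Cc /astab1P; rewrite PE => ce.
      rewrite inE (subsetP CK) //=; apply/astabP => b; rewrite -OX.
      by case/orbitP => x Xx <-; rewrite !PE -(capp c x) ?ce //; exact: Ccomm Cc Xx.
    move=> Nc; have Kc : c \in K1 by case/setIP: Nc.
    rewrite inE; apply/andP; split.
      by rewrite inE Kc; apply/cent1P; apply: NC.
    by apply/astab1P; case/setIP: Nc => _ /astabP; apply.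
  split => //.
  by rewrite -(card_orbit_stab 'P C e) OC cB stab.
move=> t s Tt Ts.
have [->|nt1] := eqVneq t 1; first exact: commute_sym (commute1 s).
have [->|ns1] := eqVneq s 1; first exact: commute1 t.
have [it ct] := key t Tt nt1.
have [is_ cs] := key s Ts ns1.
set Ct := 'C_K1[t]%G in it ct.
set Cs := 'C_K1[s]%G in is_ cs.
have NsC : forall u, u \in T1 -> N \subset 'C_K1[u].
  move=> u Tu; apply/subsetP => n Nn; rewrite inE.
  have Kn : n \in K1 by case/setIP: Nn.
  by rewrite Kn; apply/cent1P; apply: NC.
have NI : ('C_K1(B | 'P))%G \subset (Ct :&: Cs)%G by rewrite subsetI !NsC.
have IC : (Ct :&: Cs)%G \subset Ct by apply: subsetIl.
have l1 := Lagrange NI.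
have l2 := Lagrange IC.
have n0 : 0 < #|N| by apply: cardG_gt0.
have : (#|N| * (#|(Ct :&: Cs)%G : 'C_K1(B | 'P)%G| * #|Ct : (Ct :&: Cs)%G|))%N = (#|N| * p)%N.
  by rewrite mulnA l1 l2 ct mulnC.
move/eqP; rewrite eqn_pmul2l // => /eqP pe.
have : (#|Ct : (Ct :&: Cs)%G| %| p)%N by rewrite -pe dvdn_mull.
case/primeP: (pp) => p1 /[apply] /orP[/eqP i1|/eqP ip].
  have := index1g IC i1 => eqI.
  have tC : t \in Ct by rewrite inE (subsetP sTK) //=; apply/cent1P.
  have : t \in Cs by rewrite -eqI in tC; case/setIP: tC.
  by case/setIP => _ /cent1P /commute_sym.
move: pe; rewrite ip -{2}[p]mul1n => /eqP; rewrite eqn_pmul2r ?prime_gt0 // => /eqP iN.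
have eqI := index1g NI iN.
have m := mul_cardG Ct Cs.
have sK : (Ct * Cs)%g \subset K1 by apply: mul_subG; apply: subsetIl.
have := subset_leq_card sK.
rewrite -(Lagrange (subsetIl K1 'C[t])) -/Ct ct.
move=> hle.
have cI : #|Ct :&: Cs| = #|N| by move: l1; rewrite iN muln1 => ->.
have h1 : (#|Ct| * #|Cs| <= (p * #|N| * #|K1 : Ct|) * #|N|)%N.
  by rewrite m cI leq_mul.
rewrite ct cs in h1; move: h1.
rewrite -[X in (_ <= X)%N]mulnA leq_pmul2l => [hh|]; last first.
  by rewrite muln_gt0; apply/andP; split; [exact: prime_gt0 | exact: n0].
have : (p <= #|K1 : Ct|)%N by rewrite -(leq_pmul2r n0); exact: hh.
by rewrite leqNgt it.
Qed.

Theorem lemma5p1 (L : finType) (mul : L -> L -> L) (e : L) (p q : nat)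
  (K : {group {perm L}}) :
  is_loop mul e -> RCC_loop mul ->
  prime p -> prime q -> p != q -> #|L| = (p * q)%N ->
  env_H mul e \proper K -> K \proper env_G mul ->
  #|env_G mul : K| = q -> #|K : env_H mul e| = p ->
  let T1 := env_T mul :&: K in
  let K1 := <<T1>> in
  let H1 := env_H mul e :&: K1 in
  [/\ RCC_loop_folder K1 H1 T1, #|T1| = p & abelian K1] /\
  [/\ K1 <| K, (env_H mul e * K1) = K :> {set {perm L}} & H1 <| K].
Proof.
move=> [le re rinj linj] Hrcc pp pq pnq cL HK KG iGK iKH T1 K1 H1.
have PE : forall x (a : {perm L}), ('P%act x a) = a x by [].
pose R a := perm (rinj a).
have RE : forall a x, R a x = mul x a by move=> a x; rewrite permE.
have RT : forall a, R a \in env_T mul.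
  by move=> a; rewrite inE; apply/existsP; exists a; apply/forallP => x; rewrite RE.
have Tc : forall t, t \in env_T mul -> forall x, t x = mul x (t e).
  move=> t; rewrite inE => /existsP[a /forallP ta] x.
  by rewrite (eqP (ta x)) (eqP (ta e)) le.
have Tinj : forall t t', t \in env_T mul -> t' \in env_T mul -> t e = t' e -> t = t'.
  by move=> t t' Tt Tt' h; apply/permP => x; rewrite (Tc t Tt) (Tc t' Tt') h.
have HKs : env_H mul e \subset K := proper_sub HK.
have KGs : K \subset <<env_T mul>> := proper_sub KG.
have Hin : forall g, (g \in env_H mul e) = (g \in <<env_T mul>>) && (g e == e).
  by move=> g; rewrite inE.
have keyK : forall g k1 k2, g \in <<env_T mul>> -> k1 \in K -> k2 \in K ->
    g (k1 e) = k2 e -> g \in K.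
  move=> g k1 k2 Gg Kk1 Kk2 h.
  have w : k1 * g * k2^-1 \in env_H mul e.
    rewrite Hin; apply/andP; split.
      by rewrite !groupM ?groupV // (subsetP KGs).
    by rewrite !permM h permK.
  have Kw := subsetP HKs _ w.
  rewrite (_ : g = k1^-1 * (k1 * g * k2^-1) * k2); last by rewrite !mulgA mulVg mul1g mulgKV.
  by apply: groupM => //; apply: groupM => //; rewrite groupV.
have stabK : 'C_K[e | 'P] = env_H mul e.
  apply/setP => g; rewrite Hin; apply/setIP/andP => [[Kg /astab1P]|[Gg /eqP ge]].
    by rewrite PE => ->; rewrite (subsetP KGs) ?eqxx.
  split; last by apply/astab1P; rewrite PE.
  by apply: (subsetP HKs); rewrite Hin Gg ge eqxx.
have Bc : #|orbit 'P K e| = p by rewrite card_orbit stabK iKH.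
have trans : forall b, b \in orbit 'P K e -> R b \in T1 /\ R b e = b.
  move=> b /orbitP[k Kk]; rewrite PE => kb.
  have Rbe : R b e = b by rewrite RE le.
  split => //; rewrite inE RT /=.
  apply: (keyK _ 1 k) => //; first exact: (subsetP (subset_gen _)).
  by rewrite perm1 Rbe.
have K1K : K1 \subset K by rewrite gen_subG subsetIr.
have T1K1 : T1 \subset K1 := subset_gen T1.
have OK1 : orbit 'P K1 e = orbit 'P K e.
  apply/eqP; rewrite eqEsubset; apply/andP; split; apply/subsetP => b.
    by case/orbitP => k Kk <-; apply/orbitP; exists k => //; apply: (subsetP K1K).
  move/trans => [Tb Rbe]; apply/orbitP; exists (R b) => //; exact: (subsetP T1K1).
have conjT : forall t k, t \in T1 -> k \in K -> t ^ k \in T1.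
  move=> t k /setIP[Tt Kt] Kk; rewrite inE groupJ // andbT.
  by apply: Hrcc => //; apply: (subsetP KGs).
have T1conj : forall k, k \in K -> T1 :^ k = T1.
  move=> k Kk; apply/eqP; rewrite eqEcard cardJg leqnn andbT.
  apply/subsetP => _ /imsetP[t Tt ->]; exact: conjT.
have cT1 : #|T1| = p.
  have im : [set t e | t : {perm L} in T1] = orbit 'P K e.
    apply/eqP; rewrite eqEsubset; apply/andP; split; apply/subsetP => b.
      by case/imsetP => t /setIP[_ Kt] ->; apply/orbitP; exists t.
    by move/trans => [Tb Rbe]; apply/imsetP; exists (R b).
  rewrite -Bc -im card_in_imset // => t t' /setIP[Tt _] /setIP[Tt' _]; exact: Tinj.
have T11 : 1 \in T1.
  rewrite inE group1 andbT inE; apply/existsP; exists e; apply/forallP => x.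
  by rewrite perm1 re.
have trK1 : forall b, b \in orbit 'P K1 e -> exists2 t, t \in T1 & t e = b.
  by move=> b; rewrite OK1 => /trans[Tb Rbe]; exists (R b).
have cK1 : #|orbit 'P K1 e| = p by rewrite OK1.
have comm := abel_core pp T1K1 cT1 cK1
  (fun t k Tt Kk => conjT t k Tt (subsetP K1K k Kk))
  (fun t t' Tt Tt' => Tinj t t' (subsetP (subsetIl _ _) t Tt) (subsetP (subsetIl _ _) t' Tt'))
  T11 trK1.
have abK1 : abelian K1.
  by rewrite /K1 abelian_gen; apply/centsP => t Tt s Ts; exact: comm.
have Hgrp : group_set (env_H mul e).
  apply/group_setP; split; first by rewrite Hin group1 perm1 eqxx.
  move=> x y; rewrite !Hin => /andP[Gx /eqP xe] /andP[Gy /eqP ye].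
  by rewrite groupM // permM xe ye eqxx.
pose HG := Group Hgrp.
have K1n : K1 <| K.
  apply/normalP; split => // k Kk; by rewrite /K1 -genJ T1conj.
have conjH1 : forall h k, h \in H1 -> k \in K -> h ^ k \in H1.
  move=> h k /setIP[Hh K1h] Kk.
  have [_ nK1] := normalP K1n.
  rewrite inE; apply/andP; split; last by rewrite -(nK1 k Kk) memJ_conjg.
  move: Hh; rewrite !Hin => /andP[Gh /eqP he]; apply/andP; split.
    by rewrite groupJ // (subsetP KGs).
  have : k^-1 e \in orbit 'P K1 e.
    by rewrite OK1; apply/orbitP; exists k^-1; rewrite ?groupV.
  case/orbitP => k1 Kk1; rewrite PE => k1e.
  have hk1 : commute h k1 by apply: (centsP abK1).
  have hk1' : h (k1 e) = k1 (h e) by rewrite -!permM hk1.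
  by rewrite conjgE !permM -k1e hk1' he k1e permKV.
split.
  split => //.
  split => //.
  - split.
    + exact: (groupP <<T1>>%G).
    + exact: (groupP (setI_group HG <<T1>>%G)).
    + exact: subsetIr.
    + exact: T11.
    + split => // g x Kg Kx.
      have Kg' := subsetP K1K g Kg; have Kx' := subsetP K1K x Kx.
      have [f fK Kf] := injF_bij (linj (g e)).
      pose a := f (x (g e)).
      have ba : mul (g e) a = x (g e) by rewrite /a Kf.
      suff -> : T1 :&: (H1 :^ g) :* x = [set R a] by rewrite cards1.
      have cond : forall y, y \in K1 -> ((y * x^-1) ^ g^-1 \in H1) = (y (g e) == x (g e)).
        move=> y K1y; rewrite inE Hin.
        have -> : (y * x^-1) ^ g^-1 \in K1 by rewrite !groupM ?groupV.
        rewrite andbT.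
        have -> : (y * x^-1) ^ g^-1 \in <<env_T mul>>.
          by rewrite (subsetP KGs) // (subsetP K1K) // !groupM ?groupV.
        by rewrite /= conjgE invgK !permM (canF_eq (permKV g)) (canF_eq (permKV x)).
      apply/setP => y; rewrite inE mem_rcoset mem_conjg in_set1.
      apply/andP/eqP => [[T1y]|->].
        rewrite cond ?(subsetP T1K1) // => /eqP yb.
        case/setIP: T1y => Ty _.
        apply: Tinj => //; rewrite RE le.
        by apply: (linj (g e)); rewrite -(Tc y Ty) yb ba.
      have Rab : R a (g e) = x (g e) by rewrite RE ba.
      have T1a : R a \in T1.
        rewrite inE RT /=; apply: (keyK _ g (g * x)); rewrite ?groupM //.
          exact: (subsetP (subset_gen _)).
        by rewrite permM.
      by split => //; rewrite cond ?(subsetP T1K1) // Rab.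
  - by move=> g Kg; apply: T1conj; apply: (subsetP K1K).
split => //.
  apply/eqP; rewrite eqEsubset mul_subG //=.
  apply/subsetP => k Kk.
  have [T1t te] := trans (k e) (mem_orbit 'P e Kk).
  set t := R (k e) in T1t te.
  have Tt : t \in env_T mul by case/setIP: T1t.
  apply/mulsgP; exists (k * t^-1) t; last by rewrite mulgKV.
    rewrite Hin; apply/andP; split.
      by rewrite groupM ?groupV ?(subsetP KGs) //; case/setIP: T1t.
    by rewrite permM -te permK.
  exact: (subsetP T1K1).
apply/normalP; split.
  exact: subset_trans (subsetIl _ _) HKs.
move=> k Kk; apply/eqP; rewrite eqEcard cardJg leqnn andbT.
apply/subsetP => y; rewrite mem_conjg => hy.
by rewrite -(conjgKV k y) conjH1.
Qed.
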